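(* Let $(p_{nm})_{n,m\in\{0,1,2\}}$ be a probability vector with $p_{01}=p_{02}=0$, let $\mathcal{N}$ be the qutrit Pauli channel with these probabilities, and let the initial shared state be $\sigma=\sum_{n,m}p_{nm}|\Phi^{n,m}\rangle\langle\Phi^{n,m}|$ (fidelity $p_{00}$). Let $F_N$ denote the fidelity $\langle\Phi^{0,0}|\rho_N|\Phi^{0,0}\rangle$ of the shared state $\rho_N$ after $N$ successful rounds of the single-carrier protocol (described in the context) without any pre-processing. Then $F_N\to 1$ as $N\to\infty$ if and only if $$p_{00}>\max\{p_{10}+p_{11}+p_{12},\;p_{20}+p_{21}+p_{22}\}.$$
   Context: Let $\omega=e^{2\pi i/3}$ and on $\mathbb{C}^3$ with basis $|0\rangle,|1\rangle,|2\rangle$ define $X|j\rangle=|(j+1)\bmod 3\rangle$, $Z|j\rangle=\omega^j|j\rangle$. The two-qutrit Bell states are $|\Phi^{n,m}\rangle=\frac{1}{\sqrt3}\sum_{j=0}^2\omega^{mj}|j,(j+n)\bmod 3\rangle$, $n,m\in\{0,1,2\}$. The qutrit Pauli channel with probabilities $p_{nm}$ is $\mathcal{N}(\rho)=\sum_{n,m}p_{nm}Z^mX^n\rho X^{-n}Z^{-m}$; sending one half of $|\Phi^{0,0}\rangle$ through it gives $\sigma=\sum p_{nm}|\Phi^{n,m}\rangle\langle\Phi^{n,m}|$. Single-carrier protocol round: Alice (holding qutrit $A$ of the shared pair) prepares a carrier qutrit $T$ in $|0\rangle$ and applies $U_{CN}|j\rangle_A|k\rangle_T=|j\rangle_A|(j+k)\bmod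 3\rangle_T$; the carrier is sent to Bob through the same channel $\mathcal{N}$; Bob (holding qutrit $B$) applies $U_{CN'}|j\rangle_B|k\rangle_T=|j\rangle_B|(k-j)\bmod 3\rangle_T$ and measures $T$ in the computational basis; the round succeeds if the outcome is $0$, in which case the post-measurement state of $AB$ is kept. Successive rounds act on the kept state of the previous round, each with a fresh carrier sent through $\mathcal{N}$. *)

(* Defs.v *)
From HB Require Import structures.
From mathcomp Require Import all_boot all_order all_algebra.
From mathcomp Require Import complex.
From mathcomp Require Import all_classical all_reals topology normedtype sequences.
Set Implicit Arguments. Unset Strict Implicit. Unset Printing Implicit Defensive.
Import Order.TTheory GRing.Theory Num.Theory.
Local Open Scope ring_scope.

(* Qutrit index set {0,1,2} = 'I_3, with addition/subtraction modulo 3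
   given by the Z/3Z structure of 'I_3. *)
Notation I3 := 'I_3.

Section Qutrit.
Variable R : realType.
Local Notation C := R[i].
Definition rC (x : R) : C := Complex x 0.

(* operators on C^K written as matrices indexed by a finite basis type K:
   op x y = <x| op |y> *)
Definition op (K : finType) := K -> K -> C.

Definition opmul (K : finType) (A B : op K) : op K :=
  fun x y => \sum_(z : K) A x z * B z y.
Definition opadj (K : finType) (A : op K) : op K :=
  fun x y => conjc (A y x).
Definition conjop (K : finType) (U rho : op K) : op K :=
  opmul (opmul U rho) (opadj U).
Definition optr (K : finType) (A : op K) : C := \sum_(x : K) A x x.
Definition opid (K : finType) : op K := fun x y => (x == y)%:R.
Definition oppow (K : finType) (A : op K) (n : nat) : op K :=
  iter n (opmul A) (@opid K).

(* omega = e^{2 pi i / 3} = -1/2 + i sqrt(3)/2 *)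
Definition omega : C := Complex (- 1 / 2) (Num.sqrt 3 / 2).

Definition Xq : op I3 := fun i j => (i == j + 1)%:R.
Definition Zq : op I3 := fun i j => (i == j)%:R * omega ^+ (j : nat).

(* two-qutrit system AB, basis (a,b) *)
Definition I33 := (I3 * I3)%type.
Definition bell (n m : I3) : I33 -> C := fun ab =>
  rC (Num.sqrt 3)^-1 * (ab.2 == ab.1 + n)%:R * omega ^+ ((m : nat) * (ab.1 : nat)).
Definition proj (K : finType) (v : K -> C) : op K := fun x y => v x * conjc (v y).
(* fidelity <Phi^{0,0}| rho |Phi^{0,0}> (real part; the value is real) *)
Definition fidelity (rho : op I33) : R :=
  complex.Re (\sum_(x : I33) \sum_(y : I33) conjc (bell 0 0 x) * rho x y * bell 0 0 y).

Variable p : I3 -> I3 -> R.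

Definition sigma0 : op I33 :=
  fun x y => \sum_(n : I3) \sum_(m : I3) rC (p n m) * proj (bell n m) x y.

(* three-qutrit system A,B,T with basis ((a,b),t) *)
Definition I333 := (I33 * I3)%type.
Definition onT (P : op I3) : op I333 :=
  fun x y => (x.1 == y.1)%:R * P x.2 y.2.
Definition pauliT (rho : op I333) : op I333 :=
  fun x y => \sum_(n : I3) \sum_(m : I3)
    rC (p n m) * conjop (onT (opmul (oppow Zq m) (oppow Xq n))) rho x y.
Definition UCN : op I333 :=
  fun x y => (x == (y.1, y.2 + y.1.1))%:R.
Definition UCN' : op I333 :=
  fun x y => (x == (y.1, y.2 - y.1.2))%:R.
Definition attach0 (rho : op I33) : op I333 :=
  fun x y => rho x.1 y.1 * ((x.2 == 0) && (y.2 == 0))%:R.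
Definition Pi0 : op I333 := onT (fun i j => ((i == 0) && (j == 0))%:R).
Definition ptrT (rho : op I333) : op I33 :=
  fun x y => \sum_(t : I3) rho (x, t) (y, t).
(* normalization by the trace (success probability) *)
Definition normalize (K : finType) (rho : op K) : op K :=
  fun x y => rho x y / optr rho.

Definition round (rho : op I33) : op I33 :=
  normalize (ptrT (conjop Pi0
    (conjop UCN' (pauliT (conjop UCN (attach0 rho)))))).

Definition rhoN (N : nat) : op I33 := iter N round sigma0.
Definition FN (N : nat) : R := fidelity (rhoN N).

End Qutrit.

(* Main.v *)
Require Import Defs.
From HB Require Import structures.
From mathcomp Require Import all_boot all_order all_algebra.
From mathcomp Require Import complex.
From mathcomp Require Import all_classical all_reals topology normedtype sequences.
From mathcomp Require Import ring lra.
Import Order.TTheory GRing.Theory Num.Theory.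
Import numFieldNormedType.Exports.
Local Open Scope ring_scope.
Set Implicit Arguments. Unset Strict Implicit. Unset Printing Implicit Defensive.

Section S.
Local Open Scope complex_scope.
Variable R : realType.
Local Notation C := R[i].
Local Notation w := (omega R).

Lemma rCE (x : R) : rC x = x%:C. Proof. by []. Qed.

Lemma rCM (a b : R) : rC (a * b) = rC a * rC b.
Proof. by rewrite !rCE rmorphM. Qed.
Lemma rCD (a b : R) : rC (a + b) = rC a + rC b.
Proof. by rewrite !rCE rmorphD. Qed.
Lemma rCX (a : R) k : rC (a ^+ k) = rC a ^+ k.
Proof. by rewrite !rCE rmorphXn. Qed.
Lemma rCV (a : R) : rC (a^-1) = (rC a)^-1.
Proof. by rewrite !rCE fmorphV. Qed.
Lemma rCMn (a : R) k : rC (a *+ k) = rC a *+ k.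
Proof. by rewrite !rCE rmorphMn. Qed.
Lemma Re_rC (a : R) : complex.Re (rC a) = a. Proof. by []. Qed.
Lemma rC1 : rC (1 : R) = 1. Proof. by rewrite rCE rmorph1. Qed.
Lemma rC0 : rC (0 : R) = 0. Proof. by rewrite rCE rmorph0. Qed.
Lemma rCsum (I : finType) (f : I -> R) : rC (\sum_i f i) = \sum_i rC (f i).
Proof. by rewrite rCE rmorph_sum. Qed.

Lemma omegaJ : w * conjc w = 1 :> C.
Proof.
rewrite /omega /=.
have h : Num.sqrt (3:R) ^+ 2 = 3 by rewrite sqr_sqrtr.
apply/eqP; rewrite eq_complex /=; apply/andP; split; apply/eqP.
  set s := Num.sqrt 3. transitivity ((1 + s^+2) / 4); first by field.
  by rewrite h; field.
by field.
Qed.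

Lemma delta_l (K : finType) (x : K) (g : K -> C) :
  \sum_(z : K) (z == x)%:R * g z = g x.
Proof.
rewrite (bigD1 x) //= eqxx mul1r big1 ?addr0 // => z /negbTE ->; by rewrite mul0r.
Qed.

Lemma natr_I3 (n : 'I_3) : ((n : nat)%:R : 'I_3) = n.
Proof. exact: natr_Zp. Qed.

Lemma delta_r (K : finType) (x : K) (g : K -> C) :
  \sum_(z : K) g z * (z == x)%:R = g x.
Proof. by rewrite -[RHS](delta_l x); apply: eq_bigr => z _; rewrite mulrC. Qed.

Lemma conjc_b (b : bool) : conjc (b%:R : C) = b%:R.
Proof. by rewrite conjc_nat. Qed.

Lemma conjop_perm (K : finType) (U A : op R K) (f g : K -> K) (c : K -> C) x y :
  cancel f g -> cancel g f -> (forall x y, U x y = (x == f y)%:R * c x) ->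
  conjop U A x y = c x * A (g x) (g y) * conjc (c y).
Proof.
move=> fK gK hU; rewrite /conjop /opmul /opadj.
have e1 : forall z, \sum_w U x w * A w z = c x * A (g x) z.
  move=> z; rewrite -(delta_l (g x) (fun w => c x * A w z)).
  apply: eq_bigr => w _; rewrite hU eq_sym (can2_eq fK gK) eq_sym.
  ring.
under eq_bigr => z _ do rewrite e1 hU rmorphM rmorph_nat eq_sym (can2_eq fK gK).
rewrite -(delta_r (g y) (fun z => c x * A (g x) z * conjc (c y))).
by apply: eq_bigr => z _; rewrite eq_sym; ring.
Qed.

Lemma b0 : (false%:R : C) = 0. Proof. by []. Qed.
Lemma b1 : (true%:R : C) = 1. Proof. by []. Qed.

Lemma bool_mulr (a b : bool) : ((a && b)%:R : C) = a%:R * b%:R.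
Proof. by case: a; case: b; rewrite ?mul1r ?mul0r. Qed.

Lemma conjop_UCN (A : op R I333) x y :
  conjop (UCN R) A x y = A (x.1, x.2 - x.1.1) (y.1, y.2 - y.1.1).
Proof.
rewrite (@conjop_perm _ _ _ (fun y => (y.1, y.2 + y.1.1)) (fun x => (x.1, x.2 - x.1.1)) (fun _ => 1)).
- by rewrite rmorph1 mul1r mulr1.
- by case=> [[a b] t] /=; rewrite addrK.
- by case=> [[a b] t] /=; rewrite subrK.
- by move=> u v /=; rewrite mulr1.
Qed.

Lemma conjop_UCN' (A : op R I333) x y :
  conjop (UCN' R) A x y = A (x.1, x.2 + x.1.2) (y.1, y.2 + y.1.2).
Proof.
rewrite (@conjop_perm _ _ _ (fun y => (y.1, y.2 - y.1.2)) (fun x => (x.1, x.2 + x.1.2)) (fun _ => 1)).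
- by rewrite rmorph1 mul1r mulr1.
- by case=> [[a b] t] /=; rewrite subrK.
- by case=> [[a b] t] /=; rewrite addrK.
- by move=> u v /=; rewrite mulr1.
Qed.

Lemma ptr_Pi0 (B : op R I333) x y :
  ptrT (conjop (Pi0 R) B) x y = B (x, 0) (y, 0).
Proof.
have hP : forall u v, conjop (Pi0 R) B u v = (u.2 == 0)%:R * B u v * conjc ((v.2 == 0)%:R).
  move=> u v; rewrite (@conjop_perm _ _ _ id id (fun u => (u.2 == 0)%:R)) //=.
  case=> [u1 u2] [v1 v2]; rewrite /Pi0 /onT /= xpair_eqE !bool_mulr.
  have [->|h2] := eqVneq u2 0; last by rewrite b0 mul0r !mulr0.
  by rewrite b1 mul1r mulr1 (eq_sym 0 v2).
rewrite /ptrT.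
under eq_bigr => t _ do rewrite hP.
rewrite -(delta_l 0 (fun t => B (x, t) (y, t))).
by apply: eq_bigr => t _; rewrite rmorph_nat; case: (t == 0); rewrite ?mul1r ?mulr1 ?mul0r ?mulr0.
Qed.

Lemma eq_addr (a b c : I3) : (a == b + c) = (b == a - c).
Proof. by rewrite -subr_eq eq_sym. Qed.

Lemma eq_self_add (a n : I3) : (a == a + n) = (n == 0).
Proof. by rewrite addrC eq_addr subrr. Qed.

Lemma powX k (i j : I3) : oppow (Xq R) k i j = (i == j + k%:R)%:R.
Proof.
elim: k i j => [|k IH] i j; first by rewrite /= addr0.
rewrite /oppow iterS -/(oppow (Xq R) k) /opmul /Xq.
under eq_bigr => z _ do rewrite IH (eq_addr i).
by rewrite delta_l mulrSr addrA subr_eq.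
Qed.

Lemma powZ k (i j : I3) : oppow (Zq R) k i j = (i == j)%:R * w ^+ (k * j).
Proof.
elim: k i j => [|k IH] i j; first by rewrite /= mul0n expr0 mulr1.
rewrite /oppow iterS -/(oppow (Zq R) k) /opmul /Zq.
under eq_bigr => z _ do rewrite IH eq_sym -mulrA.
rewrite (delta_l i (fun z => w ^+ z * ((z == j)%:R * w ^+ (k * j)))) /=.
have [->|ne] := eqVneq i j; last by rewrite b0 !mul0r mulr0.
by rewrite b1 !mul1r -exprD mulSn.
Qed.

Lemma powZX (n m : I3) (i j : I3) :
  opmul (oppow (Zq R) m) (oppow (Xq R) n) i j = (i == j + n)%:R * w ^+ (m * i).
Proof.
rewrite /opmul.
under eq_bigr => z _ do rewrite powZ powX natr_I3 eq_sym -mulrA.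
rewrite (delta_l i (fun z => w ^+ (m * z) * (z == j + n)%:R)) /=.
by rewrite mulrC.
Qed.

Lemma conjop_onT (n m : I3) (A : op R I333) x y :
  conjop (onT (opmul (oppow (Zq R) m) (oppow (Xq R) n))) A x y =
  w ^+ (m * x.2) * A (x.1, x.2 - n) (y.1, y.2 - n) * conjc (w ^+ (m * y.2)).
Proof.
rewrite (@conjop_perm _ _ _ (fun y => (y.1, y.2 + n)) (fun x => (x.1, x.2 - n)) (fun x => w ^+ (m * x.2))) //.
- by case=> u t /=; rewrite addrK.
- by case=> u t /=; rewrite subrK.
- case=> [u1 u2] [v1 v2]; rewrite /onT /= powZX xpair_eqE bool_mulr; ring.
Qed.

Variable p : I3 -> I3 -> R.

Definition Kf (x y : I33) : C :=
  \sum_(n : I3) \sum_(m : I3) rC (p n m) * (w ^+ (m * x.2) *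
     ((x.2 - n - x.1 == 0) && (y.2 - n - y.1 == 0))%:R * conjc (w ^+ (m * y.2))).

Lemma ptr_round (rho : op R I33) :
  ptrT (conjop (Pi0 R) (conjop (UCN' R) (pauliT p (conjop (UCN R) (attach0 rho)))))
  = fun x y => rho x y * Kf x y.
Proof.
apply/funext => x; apply/funext => y.
rewrite ptr_Pi0 conjop_UCN' /= /pauliT /Kf big_distrr /=.
apply: eq_bigr => n _; rewrite big_distrr /=; apply: eq_bigr => m _.
rewrite conjop_onT conjop_UCN /attach0 /= !add0r.
rewrite !add0n !modn_small ?ltn_ord //; ring.
Qed.

Lemma round_eq (rho : op R I33) :
  round p rho = normalize (fun x y => rho x y * Kf x y).
Proof. by rewrite /round ptr_round. Qed.

Lemma wJk k : w ^+ k * conjc (w ^+ k) = 1.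
Proof. by rewrite rmorphXn -exprMn omegaJ expr1n. Qed.

Definition P (n : I3) : R := \sum_(m : I3) p n m.

Lemma eq_sub0 (a b n : I3) : (a - n - b == 0) = (n == a - b).
Proof. by rewrite addrAC subr_eq0 eq_sym. Qed.

Lemma Kf_diag x : Kf x x = rC (P (x.2 - x.1)).
Proof.
rewrite /Kf /P.
under eq_bigr => n _ do under eq_bigr => m _ do rewrite andbb eq_sub0 mulrAC wJk mul1r.
under eq_bigr => n _ do rewrite -big_distrl /=.
rewrite (delta_r (x.2 - x.1) (fun n => \sum_m rC (p n m))).
by rewrite rCE rmorph_sum.
Qed.

Lemma sum_m0 (F : I3 -> C) : (forall m, m != 0 -> F m = 0) -> \sum_m F m = F 0.
Proof. by move=> h; rewrite (bigD1 0) //= big1 ?addr0 // => m /h. Qed.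

Hypothesis hp0m : forall m, m != 0 -> p 0 m = 0.

Lemma Kf_bell (a a' : I3) : Kf (a, a) (a', a') = rC (p 0 0).
Proof.
rewrite /Kf /=.
under eq_bigr => n _ do under eq_bigr => m _ do rewrite !eq_sub0 !subrr andbb.
have e : forall (n m : I3) (b : C), rC (p n m) * (w ^+ (m * a) * b * conjc (w ^+ (m * a'))) =
   b * (rC (p n m) * (w ^+ (m * a) * conjc (w ^+ (m * a')))) by move=> *; ring.
under eq_bigr => n _ do under eq_bigr => m _ do rewrite e.
under eq_bigr => n _ do rewrite -big_distrr /=.
rewrite delta_l sum_m0; last by move=> m /hp0m ->; rewrite mul0r.
by rewrite !mul0n expr0 conjc1 !mulr1.
Qed.

Lemma s3 : rC (Num.sqrt (3:R))^-1 * conjc (rC (Num.sqrt (3:R))^-1) = rC (3^-1).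
Proof.
rewrite !rCE conjc_real -rmorphM; congr (_%:C).
by rewrite -invfM -expr2 sqr_sqrtr.
Qed.

Lemma proj_bell n m x y : Defs.proj (bell R n m) x y =
  rC (3^-1) * ((x.2 == x.1 + n)%:R * (y.2 == y.1 + n)%:R) *
  (w ^+ (m * x.1) * conjc (w ^+ (m * y.1))).
Proof.
rewrite /Defs.proj /bell !rmorphM rmorph_nat -s3; ring.
Qed.

Lemma bb (b : bool) : (b%:R * b%:R : C) = b%:R.
Proof. by case: b; rewrite ?mulr1 ?mulr0. Qed.

Lemma sigma0_diag x : sigma0 p x x = rC (P (x.2 - x.1) / 3).
Proof.
rewrite /sigma0.
under eq_bigr => n _ do under eq_bigr => m _ do rewrite proj_bell bb wJk mulr1 addrC eq_addr.
have e : forall (n m : I3) (b : C), rC (p n m) * (rC 3^-1 * b) = b * (rC (p n m) * rC 3^-1) by move=> *; ring.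
under eq_bigr => n _ do under eq_bigr => m _ do rewrite e.
under eq_bigr => n _ do rewrite -big_distrr /=.
by rewrite delta_l -big_distrl /= /P rCM rCsum.
Qed.

Lemma sigma0_bell (a a' : I3) : sigma0 p (a, a) (a', a') = rC (p 0 0 / 3).
Proof.
rewrite /sigma0.
under eq_bigr => n _ do under eq_bigr => m _ do rewrite proj_bell /= !eq_self_add bb.
have e : forall (n m : I3) (b : C), rC (p n m) * (rC 3^-1 * b * (w ^+ (m * a) * conjc (w ^+ (m * a')))) =
  b * (rC (p n m) * rC 3^-1 * (w ^+ (m * a) * conjc (w ^+ (m * a')))) by move=> *; ring.
under eq_bigr => n _ do under eq_bigr => m _ do rewrite e.
under eq_bigr => n _ do rewrite -big_distrr /=.
rewrite delta_l sum_m0; last by move=> m /hp0m ->; rewrite rC0 !mul0r.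
by rewrite !mul0n expr0 conjc1 !mulr1 rCM.
Qed.

Lemma sum_pair (F : I33 -> C) : \sum_x F x = \sum_a \sum_b F (a, b).
Proof. by rewrite pair_bigA; apply: eq_bigr => -[a b] _. Qed.

Lemma sum_shift (a : I3) (g : I3 -> C) : \sum_b g (b - a) = \sum_n g n.
Proof.
rewrite [LHS](reindex_inj (addIr a)) /=; apply: eq_bigr => n _; by rewrite addrK.
Qed.

Lemma sum_diag (F : I33 -> C) : \sum_x (x.2 == x.1)%:R * F x = \sum_a F (a, a).
Proof. by rewrite sum_pair; apply: eq_bigr => a _ /=; rewrite delta_l. Qed.

Definition Tn N : C := optr (fun x y => sigma0 p x y * Kf x y ^+ N).
Definition Treal N : R := \sum_(n : I3) P n ^+ N.+1.

Lemma Tn_eq N : Tn N = rC (Treal N).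
Proof.
rewrite /Tn /optr sum_pair.
under eq_bigr => a _ do under eq_bigr => b _ do rewrite sigma0_diag Kf_diag /= -rCX -rCM.
under eq_bigr => a _ do rewrite (sum_shift a (fun n => rC (P n / 3 * P n ^+ N))).
rewrite sumr_const card_ord -rCsum -rCMn.
congr rC; rewrite /Treal -sumrMnl; apply: eq_bigr => n _.
by rewrite exprS -mulr_natr; field.
Qed.

Lemma rC_neq0 (a : R) : a != 0 -> rC a != 0.
Proof. by move=> h; rewrite rCE fmorph_eq0. Qed.

Lemma rhoN_eq N : Treal 0 = 1 -> (forall N, Treal N != 0) ->
  rhoN p N = fun x y => sigma0 p x y * Kf x y ^+ N / Tn N.
Proof.
move=> h1 hT; elim: N => [|N IH].
  apply/funext => x; apply/funext => y.
  by rewrite Tn_eq h1 rC1 expr0 mulr1 divr1.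
rewrite /rhoN iterS -/(rhoN p N) round_eq IH.
apply/funext => x; apply/funext => y.
have hN := rC_neq0 (hT N); have hN1 := rC_neq0 (hT N.+1).
rewrite -!Tn_eq in hN hN1.
rewrite /normalize /optr.
have -> : \sum_x0 sigma0 p x0 x0 * Kf x0 x0 ^+ N / Tn N * Kf x0 x0 = Tn N.+1 / Tn N.
  rewrite /Tn /optr big_distrl /=; apply: eq_bigr => z _; rewrite exprSr; ring.
rewrite exprSr; field.
by rewrite hN hN1.
Qed.

Lemma bell00 x : bell R 0 0 x = rC (Num.sqrt 3)^-1 * (x.2 == x.1)%:R.
Proof. by rewrite /bell addr0 mul0n expr0 mulr1. Qed.

Lemma conjcM (a b : C) : conjc (a * b) = conjc a * conjc b.
Proof. by rewrite rmorphM. Qed.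

Lemma FN_eq N : Treal 0 = 1 -> (forall N, Treal N != 0) ->
  FN p N = p 0 0 ^+ N.+1 / Treal N.
Proof.
move=> h1 hT.
rewrite /FN /fidelity (rhoN_eq N h1 hT).
have e : forall (x y : I33) (r : C), conjc (bell R 0 0 x) * r * bell R 0 0 y =
   (x.2 == x.1)%:R * ((y.2 == y.1)%:R * (rC 3^-1 * r)).
  move=> x y r; rewrite !bell00 conjcM rmorph_nat -s3; ring.
under eq_bigr => x _ do under eq_bigr => y _ do rewrite e.
under eq_bigr => x _ do rewrite -big_distrr /= sum_diag.
rewrite sum_diag.
under eq_bigr => a _ do under eq_bigr => a' _ do rewrite sigma0_bell Kf_bell Tn_eq -rCX -rCV -!rCM.
rewrite !sumr_const !card_ord -!rCMn Re_rC exprS.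
by field; exact: hT.
Qed.
End S.

Local Open Scope classical_set_scope.
Lemma sum3 (R : realType) (f : 'I_3 -> R) : \sum_(n : 'I_3) f n = f 0 + f 1 + f 2.
Proof.
rewrite !big_ord_recr big_ord0 /= add0r.
by congr (_ + _ + _); congr (f _); apply: val_inj.
Qed.

Lemma powle (R : realType) (u v : R) k : 0 <= u -> 0 <= v -> u <= v -> u ^+ k <= v ^+ k.
Proof. by move=> u0 v0 h; apply: (@lerXn2r _ k u v); rewrite ?nnegrE. Qed.

Lemma limit_part (R : realType) (u v w : R) :
  0 <= u -> 0 <= v -> 0 <= w -> u + v + w = 1 ->
  ((fun N => u ^+ N.+1 / (u ^+ N.+1 + v ^+ N.+1 + w ^+ N.+1)) @ \oo --> (1 : R)) <->
  u > Num.max v w.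
Proof.
move=> u0 v0 w0 s1; split.
  move=> H; rewrite ltNge; apply/negP => hle.
  have hh : forall N, u ^+ N.+1 / (u ^+ N.+1 + v ^+ N.+1 + w ^+ N.+1) <= 1/2.
    move=> N.
    have a0 := exprn_ge0 N.+1 u0; have b0 := exprn_ge0 N.+1 v0; have c0 := exprn_ge0 N.+1 w0.
    have [D0|D0] := eqVneq (u ^+ N.+1 + v ^+ N.+1 + w ^+ N.+1) 0.
      by rewrite D0 invr0 mulr0; lra.
    have Dp : 0 < u ^+ N.+1 + v ^+ N.+1 + w ^+ N.+1 by rewrite lt0r D0 /=; lra.
    rewrite ler_pdivrMr //.
    move: hle; rewrite le_max => /orP[] h.
      by have := powle N.+1 u0 v0 h; lra.
    by have := powle N.+1 u0 w0 h; lra.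
  have hev := @cvgr_gt R nat \oo _ _ 1 H (1/2) ltac:(lra).
  case: hev => N _ hN.
  have := hN N (leqnn N); have := hh N; rewrite /=; lra.
rewrite gt_max => /andP[hv hw].
have up : 0 < u by apply: le_lt_trans hv.
set a := v / u; set b := w / u.
have a0 : 0 <= a by rewrite /a divr_ge0 // ltW.
have b0 : 0 <= b by rewrite /b divr_ge0 // ltW.
have a1 : a < 1 by rewrite /a ltr_pdivrMr // mul1r.
have b1 : b < 1 by rewrite /b ltr_pdivrMr // mul1r.
have ha : (fun n => a ^+ n.+1) @ \oo --> (0:R).
  rewrite (cvg_shiftS (fun n => a ^+ n)); apply: cvg_expr; rewrite ger0_norm //.
have hb : (fun n => b ^+ n.+1) @ \oo --> (0:R).
  rewrite (cvg_shiftS (fun n => b ^+ n)); apply: cvg_expr; rewrite ger0_norm //.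
have hS : (fun n => 1 + a ^+ n.+1 + b ^+ n.+1) @ \oo --> (1 + 0 + 0 : R).
  apply: cvgD; last exact: hb.
  apply: cvgD; last exact: ha.
  exact: cvg_cst.
have hV := cvgV _ hS.
have hV2 := hV ltac:(typeclasses eauto) ltac:(by rewrite !addr0 oner_eq0).
rewrite !addr0 invr1 in hV2.
have e : (fun N => u ^+ N.+1 / (u ^+ N.+1 + v ^+ N.+1 + w ^+ N.+1)) =
         (fun n => (1 + a ^+ n.+1 + b ^+ n.+1)^-1).
  apply/funext => N; rewrite /a /b !expr_div_n.
  have uk := exprn_gt0 N.+1 up; have vk := exprn_ge0 N.+1 v0; have wk := exprn_ge0 N.+1 w0.
  field; apply/andP; split; apply/negP => /eqP; lra.
by rewrite e.
Qed.


Theorem proposition1 (R : realType) (p : 'I_3 -> 'I_3 -> R)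
  (hp0 : forall n m, 0 <= p n m)
  (hp1 : \sum_(n < 3) \sum_(m < 3) p n m = 1)
  (h01 : p 0 1 = 0) (h02 : p 0 2 = 0) :
  (FN p n @[n --> \oo] --> (1 : R)) <->
  p 0 0 > Num.max (p 1 0 + p 1 1 + p 1 2) (p 2 0 + p 2 1 + p 2 2).
Proof.
have hp0m : forall m : 'I_3, m != 0 -> p 0 m = 0.
  case=> [[|[|[|k]]] Hm] //= _.
  - by rewrite (_ : Ordinal Hm = 1) ?h01 //; apply: val_inj.
  - by rewrite (_ : Ordinal Hm = 2) ?h02 //; apply: val_inj.
set u := p 0 0; set v := p 1 0 + p 1 1 + p 1 2; set w := p 2 0 + p 2 1 + p 2 2.
have hP0 : P p 0 = u by rewrite /P sum3 h01 h02 !addr0.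
have hP1 : P p 1 = v by rewrite /P sum3.
have hP2 : P p 2 = w by rewrite /P sum3.
have hT : forall N, Treal p N = u ^+ N.+1 + v ^+ N.+1 + w ^+ N.+1.
  by move=> N; rewrite /Treal sum3 hP0 hP1 hP2.
have u0 : 0 <= u by exact: hp0.
have v0 : 0 <= v by rewrite !addr_ge0.
have w0 : 0 <= w by rewrite !addr_ge0.
have s1 : u + v + w = 1.
  by rewrite -hp1 sum3 !sum3 h01 h02 !addr0.
have hT1 : Treal p 0 = 1 by rewrite hT !expr1.
have hTn : forall N, Treal p N != 0.
  move=> N; rewrite hT; apply/negP => /eqP h.
  have a0 := exprn_ge0 N.+1 u0; have b0 := exprn_ge0 N.+1 v0; have c0 := exprn_ge0 N.+1 w0.
  have [hu|hu] := ltrP 0 u; first by have := exprn_gt0 N.+1 hu; lra.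
  have [hv|hv] := ltrP 0 v; first by have := exprn_gt0 N.+1 hv; lra.
  have [hw|hw] := ltrP 0 w; first by have := exprn_gt0 N.+1 hw; lra.
  lra.
have -> : FN p = fun N => u ^+ N.+1 / (u ^+ N.+1 + v ^+ N.+1 + w ^+ N.+1).
  by apply/funext => N; rewrite (FN_eq hp0m N hT1 hTn) hT.
exact: limit_part.
Qed.
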